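(* Let $a,r$ be positive integers and let $h:\mathbb Z\to\mathbb Z_{\ge0}$ be given by $h(j)=a r^j$ for $j\ge 0$ and $h(j)=0$ for $j<0$. Then $\operatorname{hdepth}(h)=r$.
   Context: For a nonzero function $h:\mathbb Z\to\mathbb Z_{\ge 0}$ with $h(j)=0$ for all sufficiently negative $j$, and integers $k\le d$, set $\beta_k^d(h)=\sum_{j\le k}(-1)^{k-j}\binom{d-j}{k-j}h(j)$, and $\operatorname{hdepth}(h)=\max\{d\in\mathbb Z:\ \beta_k^d(h)\ge 0\text{ for all integers }k\le d\}$. *)

(* Defs.v *)
From mathcomp Require Import all_boot all_order all_algebra.
Set Implicit Arguments. Unset Strict Implicit. Unset Printing Implicit Defensive.
Import Order.TTheory GRing.Theory Num.Theory.
Local Open Scope ring_scope.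

(* beta_k^d(h) = sum_{j <= k} (-1)^(k-j) C(d-j, k-j) h(j), for k <= d.
   The sum over j <= k is made finite using a lower bound L such that
   h(j) = 0 for all j < L: it is the sum over L <= j <= k
   (empty if k < L).  For j <= k <= d, d - j >= k - j >= 0, so the
   binomial is an ordinary natural binomial coefficient. *)
Definition beta (h : int -> nat) (L k d : int) : int :=
  \sum_(i < absz (Num.max 0%R (k - L + 1)%R))
     (let j := L + (i : nat)%:Z in
      (-1) ^+ absz (k - j) * ('C(absz (d - j), absz (k - j)))%:Z * (h j)%:Z).

Definition hdepth_good (h : int -> nat) (L d : int) : Prop :=
  forall k : int, k <= d -> 0 <= beta h L k d.

Definition is_hdepth (h : int -> nat) (L D : int) : Prop :=
  hdepth_good h L D /\ (forall d : int, hdepth_good h L d -> d <= D).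

(* Main.v *)
Require Import Defs.
From mathcomp Require Import all_boot all_order all_algebra.
From mathcomp Require Import zify ring lra.
Import Order.TTheory GRing.Theory Num.Theory.
Local Open Scope ring_scope.

Definition F (r d k : nat) : int :=
  \sum_(i < k.+1) (-1) ^+ (k - i) * ('C(d - i, k - i))%:Z * (r ^ i)%:Z.

Lemma F0 r d : F r d 0 = 1.
Proof. by rewrite /F big_ord1 /= bin0 expr0 !mul1r. Qed.

Lemma recF r d k : (k < d)%N ->
  F r d k.+1 = (r.+1)%:Z * F r d k + (-1) ^+ k.+1 * ('C(d.+1, k.+1))%:Z.
Proof.
move=> kd.
set A := \sum_(i < k) (-1) ^+ (k - i.+1) * ('C(d - i.+1, k - i.+1))%:Z * (r ^ i.+1)%:Z.
have F1 : F r d k = (-1) ^+ k * ('C(d, k))%:Z + A.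
  by rewrite /F big_ord_recl /= !subn0 expn0 mulr1.
have F2 : F r d k.+1 = (-1) ^+ k.+1 * ('C(d, k.+1))%:Z +
   \sum_(i < k.+1) (-1) ^+ (k - i) * ('C(d - i.+1, k - i))%:Z * (r ^ i.+1)%:Z.
  rewrite /F big_ord_recl /= !subn0 expn0 mulr1; congr (_ + _).
have F3 : (r%:Z) * F r d k =
   \sum_(i < k.+1) (-1) ^+ (k - i) * ('C(d - i, k - i))%:Z * (r ^ i.+1)%:Z.
  rewrite /F mulr_sumr; apply: eq_bigr => i _.
  by rewrite expnS PoszM; ring.
have F4 : \sum_(i < k.+1) (-1) ^+ (k - i) * ('C(d - i.+1, k - i))%:Z * (r ^ i.+1)%:Z
   - \sum_(i < k.+1) (-1) ^+ (k - i) * ('C(d - i, k - i))%:Z * (r ^ i.+1)%:Z = A.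
  rewrite -sumrB big_ord_recr /= subnn !bin0 subrr addr0 /A.
  apply: eq_bigr => i _.
  have ik : (i < k)%N := ltn_ord i.
  have -> : (k - i = (k - i.+1).+1)%N by lia.
  have -> : (d - i = (d - i.+1).+1)%N by lia.
  rewrite binS PoszD exprS; ring.
have -> : (r.+1)%:Z = r%:Z + 1 by rewrite -addn1 PoszD.
rewrite mulrDl mul1r F3 F2.
have -> : ('C(d.+1, k.+1))%:Z = ('C(d, k.+1))%:Z + ('C(d, k))%:Z by rewrite binS PoszD.
move: F4; rewrite F1 exprS => F4.
set S1 := \sum_(i < k.+1) _ in F4 *.
set S2 := \sum_(i < k.+1) _ in F4 *.
have -> : S1 = S2 + A by rewrite -F4; ring.
ring.
Qed.

Lemma bin_le s k : ('C(s, k.+2) <= s * 'C(s, k.+1))%N.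
Proof.
have := mul_bin_left s k.+1.
have : (s - k.+1 <= s)%N by apply: leq_subr.
nia.
Qed.

Lemma Fpos r k : (k <= r)%N -> 0 <= F r r k /\
  (~~ odd k -> ('C(r.+1, k.+1))%:Z <= (r.+1)%:Z * F r r k).
Proof.
elim: k => [|k IH] kr.
  rewrite F0 mulr1 bin1; split=> //.
have [IH1 IH2] := IH (ltnW kr).
rewrite recF //.
case ok : (odd k) => /=.
-
  have e : (-1) ^+ k.+1 = 1 :> int by rewrite exprS -signr_odd ok expr1 mulrNN mulr1.
  rewrite e mul1r; split.
    apply: addr_ge0 => //; apply: mulr_ge0 => //.
  move=> _.
  have h1 := bin_le r.+1 k.
  apply: (le_trans (y := (r.+1)%:Z * ('C(r.+1, k.+1))%:Z)).
    by rewrite -PoszM lez_nat.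
  rewrite ler_pM2l // lerDr; apply: mulr_ge0 => //.
- have e : (-1) ^+ k.+1 = -1 :> int by rewrite exprS -signr_odd ok expr0 mulr1.
  rewrite e mulN1r; split; last by rewrite ok.
  by rewrite subr_ge0; apply: IH2; rewrite ok.
Qed.

Lemma beta_F a r n : (n <= r)%N ->
  beta (fun j : int => if 0 <= j then (a * r ^ absz j)%N else 0%N) 0 n%:Z r%:Z
  = a%:Z * F r r n.
Proof.
move=> nr.
have hm : absz (Num.max 0%R (n%:Z - 0 + 1)%R) = n.+1.
  have -> : n%:Z - 0 + 1 = (n.+1)%:Z by rewrite subr0 -addn1 PoszD.
  by rewrite maxElt ltz_nat.
rewrite /beta hm /F mulr_sumr; apply: eq_bigr => i _ /=.
have ik : (i <= n)%N := (ltn_ord i).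
rewrite add0r !subzn //; last by apply: leq_trans nr.
rewrite /= add0n PoszM; ring.
Qed.

Lemma beta_1 a r (m : nat) :
  beta (fun j : int => if 0 <= j then (a * r ^ absz j)%N else 0%N) 0 1 m%:Z
  = (a * r)%N%:Z - (a * m)%N%:Z.
Proof.
have hm : absz (Num.max 0%R (1 - 0 + 1 : int)%R) = 2%N by [].
rewrite /beta hm big_ord_recr big_ord1 /= bin0 bin1 expn1 expn0 muln1.
rewrite !PoszM; ring.
Qed.

Theorem corollary1p9 (a r : nat) (ha : (0 < a)%N) (hr : (0 < r)%N) :
  is_hdepth (fun j : int => if 0 <= j then (a * r ^ absz j)%N else 0%N) 0 r%:Z.
Proof.
split.
  move=> k; case: k => [n|n] kr.
    rewrite lez_nat in kr.
    rewrite beta_F //; apply: mulr_ge0 => //.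
    by case: (@Fpos r n kr).
  have h0 : (Negz n - 0 + 1 <= 0) by rewrite NegzE; lia.
  by rewrite /beta maxElt ltNge h0 big_ord0.
move=> d hd; case: d hd => [m|m] hd; last by [].
rewrite lez_nat leqNgt; apply/negP => rm.
have := hd 1; rewrite beta_1 lez_nat.
have : (1 <= m)%N by lia.
move=> -> /(_ isT).
rewrite subr_ge0 lez_nat.
nia.
Qed.
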